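(* For any $\sigma,\tau\in\mathbb{T}$ such that $[\![\sigma]\!]$ and $[\![\tau]\!]$ are defined, $\sigma=\tau$ (in $\mathbb{T}$) if and only if $[\![\sigma]\!]=[\![\tau]\!]$ (in $\mathbb{T}_C$).
   Context: \textbf{Source types.} $\mathbb{T}\ni\sigma ::= a\mid\omega\mid\sigma_1\to\sigma_2\mid\sigma_1\cap\sigma_2\mid\rho$, $\mathbb{T}_R\ni\rho ::= \langle\rangle\mid\langle l:\sigma\rangle\mid\rho_1+\rho_2\mid\rho_1\cap\rho_2$. Subtyping $\le$ on $\mathbb{T}$: least preorder with $\sigma\le\omega$; $\omega\le\omega\to\omega$; $\sigma\cap\tau\le\sigma,\tau$; $\sigma\le\tau_1,\sigma\le\tau_2\Rightarrow\sigma\le\tau_1\cap\tau_2$; $(\sigma\to\tau_1)\cap(\sigma\to\tau_2)\le\sigma\to\tau_1\cap\tau_2$; $\sigma_2\le\sigma_1,\tau_1\le\tau_2\Rightarrow\sigma_1\to\tau_1\le\sigma_2\to\tau_2$; $\langle l:\sigma\rangle\le\langle\rangle$; $\langle l:\sigma\rangle\cap\langle l:\tau\rangle\le\langle l:\sigma\cap\tau\rangle$; $\sigma\le\tau\Rightarrow\langle l:\sigma\rangle\le\langle l:\tau\rangle$; $\rho+\langle\rangle=\langle\rangle+\rho=\rho$; $(\rho_1+\rho_2)+\rho_3=\rho_1+(\rho_2+\rho_3)$; $(\rho_1\cap\rho_2)+\rho_3=(\rho_1+\rho_3)\cap(\rho_2+\rho_3)$; $\langle l:\sigma\rangle+(\langle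 l:\tau\rangle\cap\rho)=\langle l:\tau\rangle\cap\rho$; $\langle l:\sigma\rangle+(\langle l':\tau\rangle\cap\rho)=\langle l':\tau\rangle\cap(\langle l:\sigma\rangle+\rho)$ if $l\neq l'$; $\rho_1\le\rho_2\Rightarrow\rho_1+\rho\le\rho_2+\rho$; $\rho_1=\rho_2\Rightarrow\rho+\rho_1=\rho+\rho_2$. $\sigma=\tau$ means $\sigma\le\tau$ and $\tau\le\sigma$. \textbf{Target types.} $\mathbb{T}_C\ni\tau ::= a\mid\alpha\mid\omega\mid\tau_1\to\tau_2\mid\tau_1\cap\tau_2\mid c(\tau)$ ($c$ unary constructors) with subtyping given by the arrow/intersection axioms above plus $\tau_1\le\tau_2\Rightarrow c(\tau_1)\le c(\tau_2)$ and $c(\tau_1)\cap c(\tau_2)\le c(\tau_1\cap\tau_2)$; $=$ is equivalence. \textbf{Translation.} $\mathcal{L}$ is a fixed finite set of labels; constructors $\langle\!\langle\cdot\rangle\!\rangle$ and $l(\cdot)$ for $l\in\mathcal{L}$. Partial map $[\![\omega]\!]=\omega$, $[\![a]\!]=a$, $[\![\sigma\to\tau]\!]=[\![\sigma]\!]\to[\![\tau]\!]$, $[\![\sigma\cap\tau]\!]=[\![\sigma]\!]\cap[\![\tau]\!]$, $[\![\langle l:\tau\rangle]\!]=\langle\!\langle l([\![\tau]\!])\rangle\!\rangle$ for $l\in\mathcal{L}$, $[\![\langle\rangle]\!]=\langle\!\langle\omega\rangle\!\rangle$; it is undefined on types containing $+$. *)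

(* Defs.v *)
From mathcomp Require Import all_boot.
Set Implicit Arguments. Unset Strict Implicit. Unset Printing Implicit Defensive.

(* Source types T (records T_R are the subset singled out by [is_rec]). *)
Section Source.
Variables (A : Type) (Lab : eqType).

Inductive sty : Type :=
| SAtom : A -> sty
| SOmega : sty
| SArrow : sty -> sty -> sty
| SInter : sty -> sty -> sty       (* s /\ t  (also rho1 /\ rho2) *)
| REmpty : sty
| RField : Lab -> sty -> sty
| RPlus : sty -> sty -> sty.

Fixpoint is_rec (s : sty) : bool :=
  match s with
  | REmpty => true
  | RField _ _ => true
  | RPlus r1 r2 => is_rec r1 && is_rec r2
  | SInter r1 r2 => is_rec r1 && is_rec r2
  | _ => false
  end.

(* well-formedness: s belongs to the grammar of T (+ only between records) *)
Fixpoint wf (s : sty) : bool :=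
  match s with
  | SAtom _ | SOmega | REmpty => true
  | SArrow s1 s2 | SInter s1 s2 => wf s1 && wf s2
  | RField _ s1 => wf s1
  | RPlus r1 r2 => [&& is_rec r1, is_rec r2, wf r1 & wf r2]
  end.

Definition rec (s : sty) : bool := is_rec s && wf s.

Inductive ssub : sty -> sty -> Prop :=
| ss_refl s : wf s -> ssub s s
| ss_trans s t u : ssub s t -> ssub t u -> ssub s u
| ss_omega s : wf s -> ssub s SOmega
| ss_omega_arr : ssub SOmega (SArrow SOmega SOmega)
| ss_interl s t : wf s -> wf t -> ssub (SInter s t) s
| ss_interr s t : wf s -> wf t -> ssub (SInter s t) t
| ss_glb s t1 t2 : ssub s t1 -> ssub s t2 -> ssub s (SInter t1 t2)
| ss_arr_inter s t1 t2 : wf s -> wf t1 -> wf t2 ->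
    ssub (SInter (SArrow s t1) (SArrow s t2)) (SArrow s (SInter t1 t2))
| ss_arr s1 s2 t1 t2 : ssub s2 s1 -> ssub t1 t2 ->
    ssub (SArrow s1 t1) (SArrow s2 t2)
| ss_field_empty l s : wf s -> ssub (RField l s) REmpty
| ss_field_inter l s t : wf s -> wf t ->
    ssub (SInter (RField l s) (RField l t)) (RField l (SInter s t))
| ss_field l s t : ssub s t -> ssub (RField l s) (RField l t)
| ss_plus_empty_r1 r : rec r -> ssub (RPlus r REmpty) r
| ss_plus_empty_r2 r : rec r -> ssub r (RPlus r REmpty)
| ss_plus_empty_l1 r : rec r -> ssub (RPlus REmpty r) r
| ss_plus_empty_l2 r : rec r -> ssub r (RPlus REmpty r)
| ss_plus_assoc1 r1 r2 r3 : rec r1 -> rec r2 -> rec r3 ->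
    ssub (RPlus (RPlus r1 r2) r3) (RPlus r1 (RPlus r2 r3))
| ss_plus_assoc2 r1 r2 r3 : rec r1 -> rec r2 -> rec r3 ->
    ssub (RPlus r1 (RPlus r2 r3)) (RPlus (RPlus r1 r2) r3)
| ss_plus_distr1 r1 r2 r3 : rec r1 -> rec r2 -> rec r3 ->
    ssub (RPlus (SInter r1 r2) r3) (SInter (RPlus r1 r3) (RPlus r2 r3))
| ss_plus_distr2 r1 r2 r3 : rec r1 -> rec r2 -> rec r3 ->
    ssub (SInter (RPlus r1 r3) (RPlus r2 r3)) (RPlus (SInter r1 r2) r3)
| ss_plus_same1 l s t r : wf s -> wf t -> rec r ->
    ssub (RPlus (RField l s) (SInter (RField l t) r)) (SInter (RField l t) r)
| ss_plus_same2 l s t r : wf s -> wf t -> rec r ->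
    ssub (SInter (RField l t) r) (RPlus (RField l s) (SInter (RField l t) r))
| ss_plus_diff1 l l' s t r : l != l' -> wf s -> wf t -> rec r ->
    ssub (RPlus (RField l s) (SInter (RField l' t) r))
         (SInter (RField l' t) (RPlus (RField l s) r))
| ss_plus_diff2 l l' s t r : l != l' -> wf s -> wf t -> rec r ->
    ssub (SInter (RField l' t) (RPlus (RField l s) r))
         (RPlus (RField l s) (SInter (RField l' t) r))
| ss_plus_monol r1 r2 r : rec r1 -> rec r2 -> rec r ->
    ssub r1 r2 -> ssub (RPlus r1 r) (RPlus r2 r)
(* r1 = r2 => r + r1 = r + r2 (the converse inclusion is the symmetric instance) *)
| ss_plus_congr r r1 r2 : rec r -> rec r1 -> rec r2 ->
    ssub r1 r2 -> ssub r2 r1 -> ssub (RPlus r r1) (RPlus r r2).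

Definition seqv (s t : sty) : Prop := ssub s t /\ ssub t s.

End Source.

(* Target types T_C; unary constructors: <<.>> is [TCon None], l(.) is [TCon (Some l)] *)
Section Target.
Variables (A V : Type) (Lab : eqType).

Inductive tty : Type :=
| TAtom : A -> tty
| TVar : V -> tty
| TOmega : tty
| TArrow : tty -> tty -> tty
| TInter : tty -> tty -> tty
| TCon : option Lab -> tty -> tty.

Inductive tsub : tty -> tty -> Prop :=
| ts_refl s : tsub s s
| ts_trans s t u : tsub s t -> tsub t u -> tsub s u
| ts_omega s : tsub s TOmega
| ts_omega_arr : tsub TOmega (TArrow TOmega TOmega)
| ts_interl s t : tsub (TInter s t) s
| ts_interr s t : tsub (TInter s t) t
| ts_glb s t1 t2 : tsub s t1 -> tsub s t2 -> tsub s (TInter t1 t2)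
| ts_arr_inter s t1 t2 :
    tsub (TInter (TArrow s t1) (TArrow s t2)) (TArrow s (TInter t1 t2))
| ts_arr s1 s2 t1 t2 : tsub s2 s1 -> tsub t1 t2 ->
    tsub (TArrow s1 t1) (TArrow s2 t2)
| ts_con c s t : tsub s t -> tsub (TCon c s) (TCon c t)
| ts_con_inter c s t : tsub (TInter (TCon c s) (TCon c t)) (TCon c (TInter s t)).

Definition teqv (s t : tty) : Prop := tsub s t /\ tsub t s.

Fixpoint trans (calL : seq Lab) (s : sty A Lab) : option tty :=
  match s with
  | SOmega => Some TOmega
  | SAtom a => Some (TAtom a)
  | SArrow s1 s2 =>
      match trans calL s1, trans calL s2 with
      | Some t1, Some t2 => Some (TArrow t1 t2)
      | _, _ => None
      end
  | SInter s1 s2 =>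
      match trans calL s1, trans calL s2 with
      | Some t1, Some t2 => Some (TInter t1 t2)
      | _, _ => None
      end
  | RField l s1 =>
      if l \in calL then
        match trans calL s1 with
        | Some t1 => Some (TCon None (TCon (Some l) t1))
        | None => None
        end
      else None
  | REmpty => Some (TCon None TOmega)
  | RPlus _ _ => None
  end.

End Target.

(* Main.v *)
Require Import Defs.
From mathcomp Require Import all_boot.

Set Implicit Arguments. Unset Strict Implicit. Unset Printing Implicit Defensive.
Arguments TOmega {A V Lab}. Arguments SOmega {A Lab}. Arguments REmpty {A Lab}.
Arguments SAtom {A Lab} _. Arguments SArrow {A Lab} _ _. Arguments SInter {A Lab} _ _. Arguments RField {A Lab} _ _. Arguments RPlus {A Lab} _ _.
Arguments TAtom {A V Lab} _. Arguments TVar {A V Lab} _. Arguments TArrow {A V Lab} _ _. Arguments TInter {A V Lab} _ _. Arguments TCon {A V Lab} _ _.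

Fixpoint hasl {A V : Type} {Lab : eqType} (x : tty A V Lab) (l : Lab) : bool :=
  match x with
  | TCon (Some l') _ => l' == l
  | TInter a b => hasl a l || hasl b l
  | _ => false
  end.

Fixpoint del {A V : Type} {Lab : eqType} (P : Lab -> bool) (x : tty A V Lab) : tty A V Lab :=
  match x with
  | TCon (Some l) y => if P l then TOmega else TCon (Some l) y
  | TInter a b => TInter (del P a) (del P b)
  | _ => x
  end.

Fixpoint unrec {A V : Type} {Lab : eqType} (x : tty A V Lab) : tty A V Lab :=
  match x with
  | TCon None y => y
  | TInter a b => TInter (unrec a) (unrec b)
  | _ => TOmega
  end.

Fixpoint interp {A : Type} (V : Type) {Lab : eqType} (s : sty A Lab) : tty A V Lab :=
  match s with
  | SAtom a => TAtom a
  | SOmega => TOmega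
  | SArrow a b => TArrow (interp V a) (interp V b)
  | SInter a b => TInter (interp V a) (interp V b)
  | REmpty => TCon None TOmega
  | RField l a => TCon None (TCon (Some l) (interp V a))
  | RPlus r1 r2 =>
      TCon None (TInter (del (hasl (unrec (interp V r2))) (unrec (interp V r1)))
                        (unrec (interp V r2)))
  end.

Ltac tint := repeat (apply ts_glb);
  solve [ apply ts_refl | apply ts_omega
        | eapply ts_trans; [apply ts_interl | tint]
        | eapply ts_trans; [apply ts_interr | tint] ].

Section Lems.
Context {A V : Type} {Lab : eqType}.
Notation T := (tty A V Lab).

Lemma unrec_mono (x y : T) : tsub x y -> tsub (unrec x) (unrec y).
Proof.
elim=> /=.
- move=> *; exact: ts_refl.
- by move=> *; eapply ts_trans; eauto.
- move=> *; exact: ts_omega.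
- exact: ts_refl.
- move=> *; exact: ts_interl.
- move=> *; exact: ts_interr.
- by move=> *; apply ts_glb.
- move=> *; exact: ts_interl.
- move=> *; exact: ts_refl.
- by move=> c s t H IH; case: c => /= [l|]; [apply ts_refl | exact H].
- by move=> c s t; case: c => //= *; [apply ts_interl | apply ts_refl].
Qed.

Lemma del_mono P (x y : T) : tsub x y -> tsub (del P x) (del P y).
Proof.
elim=> /=.
- move=> *; exact: ts_refl.
- by move=> *; eapply ts_trans; eauto.
- move=> *; exact: ts_omega.
- exact: ts_omega_arr.
- move=> *; exact: ts_interl.
- move=> *; exact: ts_interr.
- by move=> *; apply ts_glb.
- move=> *; exact: ts_arr_inter.
- move=> *; exact: ts_arr.
- move=> c s t H IH; case: c => [l|] /=; last by apply ts_con.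
  by case: (P l); [apply ts_refl | apply ts_con].
- move=> [l|] s t /=; last by apply ts_con_inter.
  by case: (P l); [apply ts_interl | apply ts_con_inter].
Qed.

Lemma hasl_refl (x y : T) l : tsub x y -> hasl y l -> hasl x l.
Proof.
elim=> //=.
- by move=> s t u _ H1 _ H2 /H2 /H1.
- by move=> s t ->.
- by move=> s t -> ; rewrite orbT.
- by move=> s t1 t2 _ H1 _ H2 /orP [/H1|/H2].
- by move=> [l'|] * //=; rewrite ?orbb.
Qed.

Lemma del_ext P Q (x : T) : P =1 Q -> del P x = del Q x.
Proof.
move=> PQ; elim: x => //=; first by move=> a -> b ->.
by move=> [l|] y _ //=; rewrite PQ.
Qed.

Lemma del_id P (x : T) : (forall l, P l = false) -> del P x = x.
Proof.
move=> H; elim: x => //=; first by move=> a -> b ->.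
by move=> [l|] y _ //=; rewrite H.
Qed.

Lemma del_del P Q (x : T) : del P (del Q x) = del (fun l => Q l || P l) x.
Proof.
elim: x => //=; first by move=> a -> b ->.
by move=> [l|] y _ //=; case: (Q l) => //=.
Qed.

Lemma hasl_del P (x : T) l : hasl (del P x) l = hasl x l && ~~ P l.
Proof.
elim: x => //=; first by move=> a -> b ->; rewrite andb_orl.
move=> [l'|] y _ //=; case: (eqVneq l' l) => [<-|ne].
  by case: (P l') => /=; rewrite ?eqxx.
by case: (P l') => /=; rewrite ?(negbTE ne).
Qed.

Lemma conI (a b : T) : tsub (TInter (TCon None a) (TCon None b)) (TCon None (TInter a b)).
Proof. exact: ts_con_inter. Qed.

Lemma conI' (a b : T) : tsub (TCon None (TInter a b)) (TInter (TCon None a) (TCon None b)).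
Proof. by apply ts_glb; apply ts_con; tint. Qed.

Lemma rec_eq (r : sty A Lab) : is_rec r ->
  tsub (interp V r : T) (TCon None (unrec (interp V r))) /\
  tsub (TCon None (unrec (interp V r))) (interp V r : T).
Proof.
elim: r => //=; try by (intros; split; apply ts_refl).
move=> r1 IH1 r2 IH2 /andP [/IH1 [H1 H1'] /IH2 [H2 H2']]; split.
  eapply ts_trans; last by apply conI.
  by apply ts_glb; [eapply ts_trans; [apply ts_interl|] | eapply ts_trans; [apply ts_interr|]].
eapply ts_trans; first by apply conI'.
by apply ts_glb; [eapply ts_trans; [apply ts_interl|] | eapply ts_trans; [apply ts_interr|]].
Qed.

Lemma assocE (c1 c2 c3 : T) :
  del (fun l => hasl (del (hasl c3) c2) l || hasl c3 l) c1 = del (hasl c3) (del (hasl c2) c1).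
Proof.
rewrite del_del; apply del_ext => l; rewrite hasl_del.
by case: (hasl c2 l); case: (hasl c3 l).
Qed.

Lemma sound (s t : sty A Lab) : ssub s t -> tsub (interp V s) (interp V t).
Proof.
elim=> {s t}.
- move=> *; exact: ts_refl.
- move=> s t u _ H1 _ H2; exact: ts_trans H1 H2.
- move=> *; exact: ts_omega.
- exact: ts_omega_arr.
- move=> *; exact: ts_interl.
- move=> *; exact: ts_interr.
- by move=> *; apply: ts_glb.
- move=> *; exact: ts_arr_inter.
- by move=> *; apply: ts_arr.
- by move=> *; apply: ts_con; apply: ts_omega.
- move=> l s t _ _ /=; eapply ts_trans; [apply conI|]; apply ts_con; apply ts_con_inter.
- by move=> l s t _ H /=; do 2 apply ts_con.
- move=> r /andP[/rec_eq [E1 E2] _] /=; rewrite del_id //.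
  eapply ts_trans; last exact E2; apply ts_con; apply ts_interl.
- move=> r /andP[/rec_eq [E1 E2] _] /=; rewrite del_id //.
  eapply ts_trans; first exact E1; apply ts_con; apply ts_glb; [apply ts_refl|apply ts_omega].
- move=> r /andP[/rec_eq [E1 E2] _] /=.
  eapply ts_trans; last exact E2; apply ts_con; apply ts_interr.
- move=> r /andP[/rec_eq [E1 E2] _] /=.
  eapply ts_trans; first exact E1; apply ts_con; tint.
- by move=> r1 r2 r3 _ _ _ /=; rewrite assocE; apply ts_con; tint.
- by move=> r1 r2 r3 _ _ _ /=; rewrite assocE; apply ts_con; tint.
- by move=> r1 r2 r3 _ _ _ /=; apply ts_glb; apply ts_con; tint.
- by move=> r1 r2 r3 _ _ _ /=; eapply ts_trans; [apply conI|]; apply ts_con; tint.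
- move=> l s t r _ _ /andP[/rec_eq [E1 E2] _] /=; rewrite eqxx /=.
  apply ts_glb; first by apply ts_con; tint.
  by eapply ts_trans; last exact E2; apply ts_con; tint.
- move=> l s t r _ _ /andP[/rec_eq [E1 E2] _] /=; rewrite eqxx /=.
  eapply ts_trans.
    apply ts_glb; [apply ts_interl | eapply ts_trans; [apply ts_interr| exact E1]].
  by eapply ts_trans; [apply conI|]; apply ts_con; tint.
- move=> l l' s t r ne _ _ /andP[/rec_eq [E1 E2] _] /=; rewrite eq_sym (negbTE ne) /=.
  by apply ts_glb; apply ts_con; tint.
- move=> l l' s t r ne _ _ /andP[/rec_eq [E1 E2] _] /=; rewrite eq_sym (negbTE ne) /=.
  by eapply ts_trans; [apply conI|]; apply ts_con; tint.
- move=> r1 r2 r _ _ _ _ H /=.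
  apply ts_con; apply ts_glb; last by apply ts_interr.
  by eapply ts_trans; [apply ts_interl|]; apply del_mono; apply unrec_mono.
- move=> r r1 r2 _ _ _ _ H _ H' /=.
  have E : hasl (unrec (interp V r1)) =1 hasl (unrec (interp V r2)).
    by move=> l; apply/idP/idP; apply: hasl_refl; apply: unrec_mono.
  rewrite (del_ext _ E); apply ts_con; apply ts_glb; first by apply ts_interl.
  by eapply ts_trans; [apply ts_interr|]; apply unrec_mono.
Qed.

Fixpoint back (x : T) : sty A Lab :=
  match x with
  | TAtom a => SAtom a
  | TArrow a b => SArrow (back a) (back b)
  | TInter a b => SInter (back a) (back b)
  | TCon None y => back_rec y
  | _ => SOmega
  end
with back_rec (x : T) : sty A Lab :=
  match x with
  | TCon (Some l) y => RField l (back y)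
  | TInter a b => SInter (back_rec a) (back_rec b)
  | _ => REmpty
  end.

Lemma back_wf (x : T) : wf (back x) /\ wf (back_rec x).
Proof.
elim: x => //=.
- by move=> a [-> _] b [-> _].
- by move=> a [-> ->] b [-> ->].
- by move=> [l|] y [H1 H2].
Qed.

Lemma back_rec_empty (x : T) : ssub (back_rec x) REmpty.
Proof.
elim: x => /=; try by (intros; apply ss_refl).
- move=> a Ha b _; eapply ss_trans; last exact Ha.
  by apply ss_interl; apply back_wf.
- by move=> [l|] y _ /=; [apply ss_field_empty; apply back_wf | apply ss_refl].
Qed.

Lemma back_mono (x y : T) : tsub x y ->
  ssub (back x) (back y) /\ ssub (back_rec x) (back_rec y).
Proof.
have W := back_wf.
elim=> {x y}.
- by move=> s; split; apply ss_refl; apply W.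
- by move=> s t u _ [H1 H2] _ [H3 H4]; split; eapply ss_trans; eauto.
- by move=> s; split; [apply ss_omega; apply W | apply back_rec_empty].
- by split; [apply ss_omega_arr | apply ss_refl].
- by move=> s t; split; apply ss_interl; apply W.
- by move=> s t; split; apply ss_interr; apply W.
- by move=> s t1 t2 _ [H1 H2] _ [H3 H4]; split; apply ss_glb.
- by move=> s t1 t2; split; [apply ss_arr_inter; apply W | apply ss_interl].
- by move=> s1 s2 t1 t2 _ [H1 _] _ [H2 _]; split; [apply ss_arr | apply ss_refl].
- move=> [l|] s t _ [H1 H2] /=; split => //; try by apply ss_refl.
  by apply ss_field.
- move=> [l|] s t /=; split.
  + by apply ss_omega => /=.
  + by apply ss_field_inter; apply W.
  + by apply ss_refl => /=; rewrite !(proj2 (W _)).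
  + by apply ss_interl.
Qed.

End Lems.

Lemma interp_trans {A V : Type} {Lab : eqType} (calL : seq Lab) (s : sty A Lab) s' :
  trans V calL s = Some s' -> interp V s = s'.
Proof.
elim: s s' => /=.
- by move=> a s' [<-].
- by move=> s' [<-].
- move=> a IHa b IHb s'; case Ea: (trans V calL a) => [ta|] //; case Eb: (trans V calL b) => [tb|] // [<-].
  by rewrite (IHa _ Ea) (IHb _ Eb).
- move=> a IHa b IHb s'; case Ea: (trans V calL a) => [ta|] //; case Eb: (trans V calL b) => [tb|] // [<-].
  by rewrite (IHa _ Ea) (IHb _ Eb).
- by move=> s' [<-].
- move=> l a IHa s'; case: (l \in calL) => //; case Ea: (trans V calL a) => [ta|] // [<-].
  by rewrite (IHa _ Ea).
- by [].
Qed.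

Lemma back_trans {A V : Type} {Lab : eqType} (calL : seq Lab) (s : sty A Lab) s' :
  trans V calL s = Some s' -> back s' = s.
Proof.
elim: s s' => /=.
- by move=> a s' [<-].
- by move=> s' [<-].
- move=> a IHa b IHb s'; case Ea: (trans V calL a) => [ta|] //; case Eb: (trans V calL b) => [tb|] // [<-].
  by rewrite /= (IHa _ Ea) (IHb _ Eb).
- move=> a IHa b IHb s'; case Ea: (trans V calL a) => [ta|] //; case Eb: (trans V calL b) => [tb|] // [<-].
  by rewrite /= (IHa _ Ea) (IHb _ Eb).
- by move=> s' [<-].
- move=> l a IHa s'; case: (l \in calL) => //; case Ea: (trans V calL a) => [ta|] // [<-].
  by rewrite /= (IHa _ Ea).
- by [].
Qed.

Theorem lemma5p1 (A V : Type) (Lab : eqType) (calL : seq Lab)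
  (s t : sty A Lab) (s' t' : tty A V Lab) :
  wf s -> wf t ->
  trans V calL s = Some s' -> trans V calL t = Some t' ->
  seqv s t <-> teqv s' t'.
Proof.
move=> _ _ Hs Ht; split.
- move=> [H1 H2]; rewrite -(interp_trans Hs) -(interp_trans Ht).
  by split; apply sound.
- move=> [H1 H2]; rewrite -(back_trans Hs) -(back_trans Ht).
  by split; apply (back_mono H1) || apply (back_mono H2).
Qed.
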